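(* Let $V$ be an object of $\mathcal C$ and let $v\in V$ be a dominant vector of weight $i\in\{0,1,\dots,r-2\}$. Put $j=r-2-i$ and define the following vectors of $V$: - $h_{i-2k}=F^kv$ for $k=0,\dots,i$; - $R_{r-j}=Ev$ and $R_{r-j+2k}=E^kR_{r-j}$ for $k=0,\dots,j$; - $s_i=FR_{r-j}$ and $s_{i-2k}=F^ks_i$ for $k=0,\dots,i$; - $L_{j-r}=F^{i+1}v$ and $L_{j-r-2k}=F^kL_{j-r}$ for $k=0,\dots,j$. Then the linear span of these $2r$ vectors is a submodule of $V$. Moreover, the following relations hold whenever the involved vectors are defined: - $Hw_m=mw_m$ and $Kw_m=q^mw_m$ for $w\in\{h,s,R,L\}$; - $ER_m=R_{m+2}$, and $Fw_m=w_{m-2}$ for $w\in\{h,s,L\}$; - $Fh_{-i}=L_{j-r}$ and $EL_{j-r}=s_{-i}$; - $ER_{j+r}=Es_i=Fs_{-i}=FL_{-j-r}=0$; - $Eh_{i-2k}=\gamma_{i,k}h_{i-2k+2}+s_{i-2k+2}$ and $Es_{i-2k}=\gamma_{i,k}s_{i-2k+2}$; - $FR_{r-j+2k}=-\gamma_{j,k}R_{r-j+2k-2}$ and $EL_{j-2k-r}=-\gamma_{j,k}L_{j-2k-r+2}$. Here $\gamma_{n,k}=[k][n-k+1]$.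
   Context: Fix a positive integer $r$. Set $q=e^{\pi\sqrt{-1}/r}$, $q^x=e^{\pi\sqrt{-1}x/r}$, $\{x\}=q^x-q^{-x}$, $[x]=\{x\}/\{1\}$. $\overline U=\overline U_q^H\mathfrak{sl}(2)$ is the $\mathbb C$-algebra generated by $E,F,K,K^{-1},H$ with relations - $KK^{-1}=K^{-1}K=1$, $KEK^{-1}=q^2E$, $KFK^{-1}=q^{-2}F$, - $EF-FE=\frac{K-K^{-1}}{q-q^{-1}}$, - $HK=KH$, $[H,E]=2E$, $[H,F]=-2F$, - $E^r=F^r=0$. $\mathcal C$ is the category of finite-dimensional weight $\overline U$-modules: $H$ acts diagonalizably and $K$ acts by $q^\lambda$ on $H$-eigenvectors of eigenvalue (weight) $\lambda$. A weight vector $v$ is called dominant if $(FE)^2v=0$. *)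

(* Defs.v *)
From HB Require Import structures.
From mathcomp Require Import all_boot all_order all_algebra.
From mathcomp Require Import reals sequences exp trigo.
From mathcomp.real_closed Require Import complex.
Set Implicit Arguments. Unset Strict Implicit. Unset Printing Implicit Defensive.
Import Order.TTheory GRing.Theory Num.Theory.
Local Open Scope ring_scope.

Section Defs.
Variable (R : realType) (r : nat).
Local Notation C := (R[i]).

(* q^x = exp(pi sqrt(-1) x / r) for complex x = a + b sqrt(-1):
   exp((-pi b + sqrt(-1) pi a)/r) = e^{-pi b/r} (cos(pi a/r) + sqrt(-1) sin(pi a/r)) *)
Definition qpow (x : C) : C :=
  let a := complex.Re x in let b := complex.Im x in
  Complex (expR (- (pi * b) / r%:R) * cos (pi * a / r%:R))
          (expR (- (pi * b) / r%:R) * sin (pi * a / r%:R)).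

Definition q : C := qpow 1.

Definition qcurly (x : C) : C := qpow x - qpow (- x).
Definition qint (x : C) : C := qcurly x / qcurly 1.
Definition qgamma (n k : nat) : C :=
  qint k%:R * qint (n%:R - k%:R + 1).

(* V (a finite-dimensional C-vector space) with operators E F K K^{-1} H is a
   module over \overline U_q^H sl(2) lying in the category C (finite-dimensional
   weight module). *)
Definition is_Ubar_module (V : vectType C) (E F K Ki H : V -> V) : Prop :=
  ((forall x, K (Ki x) = x) /\ (forall x, Ki (K x) = x)) /\
  (forall x, K (E (Ki x)) = (q ^+ 2) *: E x) /\
  (forall x, K (F (Ki x)) = (q ^+ 2)^-1 *: F x) /\
  (forall x, E (F x) - F (E x) = (q - q^-1)^-1 *: (K x - Ki x)) /\
  (forall x, H (K x) = K (H x)) /\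
  (forall x, H (E x) - E (H x) = 2 *: E x) /\
  (forall x, H (F x) - F (H x) = - (2 *: F x)) /\
  ((forall x, iter r E x = 0) /\ (forall x, iter r F x = 0)).

Definition is_weight_module (V : vectType C) (K H : V -> V) : Prop :=
  (exists2 b : seq V, basis_of fullv b &
      forall w, w \in b -> exists lam : C, H w = lam *: w) /\
  (forall (lam : C) (w : V), w != 0 -> H w = lam *: w -> K w = qpow lam *: w).

Definition in_category_C (V : vectType C) (E F K Ki H : {linear V -> V}) : Prop :=
  is_Ubar_module E F K Ki H /\ is_weight_module K H.

Definition weight_vector (V : vectType C) (H : V -> V) (lam : C) (v : V) : Prop :=
  v != 0 /\ H v = lam *: v.

Definition dominant (V : vectType C) (E F : V -> V) (v : V) : Prop :=
  F (E (F (E v))) = 0.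

Definition is_submodule (V : vectType C) (E F K Ki H : V -> V) (U : {vspace V}) : Prop :=
  forall x, x \in U -> [/\ E x \in U, F x \in U, K x \in U, Ki x \in U & H x \in U].

End Defs.

(* The 2r vectors of Proposition 6.1, indexed by k:
   hv k = h_{i-2k} (k = 0..i),  Rv k = R_{r-j+2k} (k = 0..j),
   sv k = s_{i-2k} (k = 0..i),  Lv k = L_{j-r-2k} (k = 0..j). *)
Section Vectors.
Variables (R : realType) (V : vectType R[i]) (E F : V -> V) (i : nat) (v : V).
Definition hv (k : nat) : V := iter k F v.
Definition Rv (k : nat) : V := iter k E (E v).
Definition sv (k : nat) : V := iter k F (F (E v)).
Definition Lv (k : nat) : V := iter k F (iter i.+1 F v).
(* the list of the 2r vectors, with j = r - 2 - i *)
Definition prop61_vectors (j : nat) : seq V :=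
  [seq hv k | k <- iota 0 i.+1] ++ [seq Rv k | k <- iota 0 j.+1] ++
  [seq sv k | k <- iota 0 i.+1] ++ [seq Lv k | k <- iota 0 j.+1].
End Vectors.

(* Main.v *)
Require Import Defs.
From HB Require Import structures.
From mathcomp Require Import all_boot all_order all_algebra.
From mathcomp Require Import reals sequences exp trigo.
From mathcomp.real_closed Require Import complex.
From mathcomp Require Import ring lra zify.
Import Order.TTheory GRing.Theory Num.Theory.
Local Open Scope ring_scope.
Set Implicit Arguments. Unset Strict Implicit.

Section Q.
Variables (R : realType) (r : nat).
Local Notation C := (R[i]).
Local Notation qp := (@qpow R r).
Lemma qpowD (x y : C) : qp (x + y) = qp x * qp y.
Proof.
rewrite /qpow; move: (@pi R) => p.
case: x => a b; case: y => c d /=.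
have e1 : - (p * (b + d)) / r%:R = - (p * b) / r%:R + - (p * d) / r%:R by rewrite -mulrDl -opprD mulrDr.
have e2 : p * (a + c) / r%:R = p * a / r%:R + p * c / r%:R by rewrite -mulrDl mulrDr.
rewrite e1 e2 expRD cosD sinD.
apply/eqP; rewrite eq_complex /=; apply/andP; split; apply/eqP; ring.
Qed.
Lemma qpow0 : qp 0 = 1.
Proof. by rewrite /qpow /= !(mulr0, mul0r, oppr0, expR0, cos0, sin0, mul1r). Qed.
Lemma qpowNmul (x : C) : qp (- x) * qp x = 1.
Proof. by rewrite -qpowD addNr qpow0. Qed.
Lemma qpow_neq0 (x : C) : qp x != 0.
Proof. apply/negP => /eqP h; have := qpowNmul x; rewrite h mulr0 => /eqP; by rewrite eq_sym oner_eq0. Qed.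
Lemma qpowN (x : C) : qp (- x) = (qp x)^-1.
Proof. by apply: (mulIf (qpow_neq0 x)); rewrite qpowNmul mulVf // qpow_neq0. Qed.
Lemma qpow_nat (n : nat) : qp n%:R = (q R r) ^+ n.
Proof. elim: n => [|n IH]; first by rewrite qpow0. by rewrite -natr1 qpowD IH exprSr. Qed.
Lemma natC (n : nat) : (n%:R : C) = Complex n%:R 0.
Proof. by rewrite -(rmorph_nat (real_complex R)). Qed.
Lemma qpow_real (x : R) : qp (Complex x 0) = Complex (cos (pi * x / r%:R)) (sin (pi * x / r%:R)).
Proof. by rewrite /qpow /= !(mulr0, mul0r, oppr0, expR0, mul1r). Qed.
Hypothesis r2 : (2 <= r)%N.
Lemma qpow_r : qp r%:R = -1.
Proof.
rewrite natC qpow_real mulfK ?cospi ?sinpi //; last by rewrite pnatr_eq0 -lt0n; apply: leq_trans r2.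
by rewrite -(rmorphN1 (real_complex R)).
Qed.
Lemma qcurly_nat_neq0 (n : nat) : (0 < n < r)%N -> qcurly r (n%:R : C) != 0.
Proof.
move=> /andP [n0 nr].
rewrite /qcurly.
have -> : (- (n%:R : C)) = Complex (- n%:R) 0.
  by rewrite natC; apply/eqP; rewrite eq_complex /= oppr0 !eqxx.
rewrite natC !qpow_real.
have hr : (0 : R) < r%:R by rewrite ltr0n; apply: leq_trans r2.
have hs : 0 < sin (pi * n%:R / r%:R :> R).
  apply: sin_gt0_pi; apply/andP; split.
    by apply: divr_gt0 => //; apply: mulr_gt0; [exact: pi_gt0| rewrite ltr0n].
  rewrite ltr_pdivrMr // ltr_pM2l ?pi_gt0 // ltr_nat //.
apply/negP => /eqP /eqP; rewrite eq_complex /= => /andP [_ /eqP].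
rewrite mulrN mulNr sinN => h.
lra.
Qed.
Lemma qc1 : qcurly r (1 : C) != 0.
Proof. by have := @qcurly_nat_neq0 1%N; rewrite r2; apply. Qed.
Lemma qcurlyN (x : C) : qcurly r (- x) = - qcurly r x.
Proof. by rewrite /qcurly opprK opprB. Qed.
Lemma qintN (x : C) : qint r (- x) = - qint r x.
Proof. by rewrite /qint qcurlyN mulNr. Qed.
Lemma qcurly_rB (x : C) : qcurly r (r%:R - x) = qcurly r x.
Proof.
rewrite /qcurly opprB !qpowD !qpowN qpow_r invrN invr1.
have := qpow_neq0 x; move: (qp x) => a ha; field.
by [].
Qed.
Lemma qint_rB (x : C) : qint r (r%:R - x) = qint r x.
Proof. by rewrite /qint qcurly_rB. Qed.
Lemma qint1 : qint r (1 : C) = 1.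
Proof. by rewrite /qint divff // qc1. Qed.
Lemma qint0 : qint r (0 : C) = 0.
Proof. by rewrite /qint /qcurly oppr0 subrr mul0r. Qed.
Lemma qint_nat_neq0 (n : nat) : (0 < n < r)%N -> qint r (n%:R : C) != 0.
Proof. by move=> h; rewrite /qint mulf_neq0 ?invr_eq0 ?qc1 ?qcurly_nat_neq0. Qed.

Ltac qsimp := rewrite /qint /qcurly ?(qpowN, qpowD, opprD, opprK) ?(qpowN, qpowD, opprD, opprK) ?(qpowN, qpowD, opprD, opprK).

Lemma Id1 (n m : C) : qint r n * qint r (m + n - 1) + qint r (m + n + n) = qint r (n + 1) * qint r (m + n).
Proof.
have h1 : qp 1 * qp 1 - 1 != 0.
  have := qc1; rewrite /qcurly qpowN => h.
  have -> : qp 1 * qp 1 - 1 = qp 1 * (qp 1 - (qp 1)^-1) by rewrite mulrBr divff ?qpow_neq0.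
  by rewrite mulf_neq0 ?qpow_neq0.
qsimp.
have := qpow_neq0 m; have := qpow_neq0 n; have := qpow_neq0 1.
move: (qp m) (qp n) (qp 1) h1 => a b c h1 ha hb hc.
field.
by rewrite ha hb hc h1.
Qed.
Lemma Id2 (n m : C) : qint r n * qint r (m - n + 1) + qint r (m - n - n) = qint r (n + 1) * qint r (m - n).
Proof.
have := Id1 n (- m).
have -> : - m + n - 1 = - (m - n + 1) by ring.
have -> : - m + n + n = - (m - n - n) by ring.
have -> : - m + n = - (m - n) by ring.
rewrite !qintN mulrN => h.
by rewrite mulrN in h; apply: oppr_inj; rewrite -h; ring.
Qed.
End Q.

Section M.
Variables (R : realType) (r : nat) (V : vectType R[i]) (E F K Ki H : {linear V -> V}).
Hypothesis hV : in_category_C r E F K Ki H.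
Hypothesis r2 : (2 <= r)%N.
Local Notation C := (R[i]).
Local Notation qp := (@qpow R r).
Local Notation qi := (@qint R r).

Definition wt (m : C) (y : V) := H y = m *: y.

Lemma wtK m y : wt m y -> K y = qp m *: y.
Proof.
move=> h; have [y0|yn0] := eqVneq y 0; first by rewrite y0 linear0 scaler0.
by case: hV => _ [_ hK]; apply: hK.
Qed.
Lemma wtKi m y : wt m y -> Ki y = (qp m)^-1 *: y.
Proof.
move=> h; case: hV => [[[_ KiK] _] _].
have := KiK y; rewrite (wtK h) linearZ => e.
by rewrite -{2}e scalerA mulVf ?scale1r // qpow_neq0.
Qed.
Lemma comm_wt m y : wt m y -> E (F y) = F (E y) + qi m *: y.
Proof.
move=> h; case: hV => [[_ [_ [_ [hc _]]]] _].
have := hc y; move/(congr1 (fun z => z + F (E y))); rewrite subrK => ->.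
rewrite addrC; congr (_ + _).
rewrite (wtK h) (wtKi h) -scalerBl scalerA; congr (_ *: _).
by rewrite /qint /qcurly /q !qpowN mulrC.
Qed.
Lemma wtE m y : wt m y -> wt (m + 2) (E y).
Proof.
move=> h; rewrite /wt in h *; case: hV => [[_ [_ [_ [_ [_ [hE _]]]]]] _].
have := hE y; move/(congr1 (fun z => z + E (H y))); rewrite subrK => ->.
by rewrite h linearZ /= [RHS]scalerDl addrC.
Qed.
Lemma wtF m y : wt m y -> wt (m - 2) (F y).
Proof.
move=> h; rewrite /wt in h *; case: hV => [[_ [_ [_ [_ [_ [_ [hF _]]]]]]] _].
have := hF y; move/(congr1 (fun z => z + F (H y))); rewrite subrK => ->.
by rewrite h [F (_ *: _)]linearZ /= scalerBl addrC.
Qed.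
Lemma wt_iterE m y k : wt m y -> wt (m + 2 * k%:R) (iter k E y).
Proof.
move=> h; elim: k => [|k IH]; first by rewrite mulr0 addr0.
rewrite iterS; have := wtE IH; congr wt; rewrite -natr1; ring.
Qed.
Lemma wt_iterF m y k : wt m y -> wt (m - 2 * k%:R) (iter k F y).
Proof.
move=> h; elim: k => [|k IH]; first by rewrite mulr0 subr0.
rewrite iterS; have := wtF IH; congr wt; rewrite -natr1; ring.
Qed.
Lemma iter_lin0 (f : {linear V -> V}) k : iter k f 0 = 0.
Proof. by elim: k => [|k IH] //=; rewrite IH linear0. Qed.
Lemma iter_linB (f g : {linear V -> V}) k x : iter k f (g x) = iter k f (g x).
Proof. by []. Qed.

Lemma CE m y k : wt m y ->
  F (iter k.+1 E y) = iter k.+1 E (F y) - (qi (k.+1)%:R * qi (m + k%:R)) *: iter k E y.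
Proof.
move=> h; elim: k => [|k IH].
  rewrite /= mulr1n (@qint1 R r r2) mul1r addr0 (comm_wt h) addrK //.
have hz := wt_iterE k.+1 h.
have e : F (E (iter k.+1 E y)) = E (F (iter k.+1 E y)) - qi (m + 2 * k.+1%:R) *: iter k.+1 E y.
  by rewrite (comm_wt hz) addrK.
rewrite iterS e IH linearB linearZ -!iterS -addrA -opprD -scalerDl.
congr (_ - _ *: _).
have := @Id1 R r r2 k.+1%:R m.
have -> : m + k.+1%:R - 1 = m + k%:R by rewrite -natr1; ring.
have -> : m + k.+1%:R + k.+1%:R = m + 2 * k.+1%:R by ring.
have -> : k.+1%:R + 1 = k.+2%:R :> C by rewrite natr1.
by [].
Qed.

Lemma CF m y k : wt m y ->
  E (iter k.+1 F y) = iter k.+1 F (E y) + (qi (k.+1)%:R * qi (m - k%:R)) *: iter k F y.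
Proof.
move=> h; elim: k => [|k IH].
  rewrite /= mulr1n (@qint1 R r r2) mul1r subr0 (comm_wt h) //.
have hz := wt_iterF k.+1 h.
rewrite iterS (comm_wt hz) IH linearD linearZ -!iterS -addrA -scalerDl.
congr (_ + _ *: _).
have := @Id2 R r r2 k.+1%:R m.
have -> : m - k.+1%:R + 1 = m - k%:R by rewrite -natr1; ring.
have -> : m - k.+1%:R - k.+1%:R = m - 2 * k.+1%:R by ring.
have -> : k.+1%:R + 1 = k.+2%:R :> C by rewrite natr1.
by [].
Qed.

Lemma Er x : iter r E x = 0.
Proof. by case: hV => [[_ [_ [_ [_ [_ [_ [_ [hEr hFr]]]]]]]] _]; apply: hEr. Qed.
Lemma Fr x : iter r F x = 0.
Proof. by case: hV => [[_ [_ [_ [_ [_ [_ [_ [hEr hFr]]]]]]]] _]; apply: hFr. Qed.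
Lemma qnz n : (0 < n < r)%N -> qi n%:R != 0.
Proof. exact: (@qint_nat_neq0 R r r2 n). Qed.
Lemma qnz2 n : (r < n < r + r)%N -> qi n%:R != 0.
Proof.
move=> hn.
have e : (n%:R : C) = r%:R - (- ((n - r)%N%:R)).
  rewrite natrB; first ring. lia.
rewrite e (@qint_rB R r r2) qintN oppr_eq0; apply: qnz; lia.
Qed.
Lemma qir : qi r%:R = 0.
Proof. by rewrite /qint /qcurly qpowN (@qpow_r R r r2) invrN1 subrr mul0r. Qed.
Lemma scale_cancel (c : C) (w : V) : c != 0 -> c *: w = 0 -> w = 0.
Proof. by move=> hc /eqP; rewrite scaler_eq0 (negbTE hc) => /eqP. Qed.
Lemma down (z : nat -> V) m n : (m <= n)%N ->
  (forall k, (m <= k < n)%N -> z k.+1 = 0 -> z k = 0) -> z n = 0 -> z m = 0.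
Proof.
move=> hmn hs; rewrite -(subnK hmn).
have : (n - m + m <= n)%N by rewrite subnK.
move: (n - m)%N => d.
elim: d => [|d IH] //= hd hz; apply: IH; first lia.
by apply: hs; [lia | rewrite -addSn].
Qed.

Variables (i : nat) (v : V).
Hypotheses (hi : (i.+2 <= r)%N) (hw : wt i%:R v) (hdom : F (E (F (E v))) = 0).
Let j := (r - 2 - i)%N.

Lemma key :
  iter j.+1 E (E v) = 0 /\ E (F (E v)) = 0 /\ iter i.+1 F (F (E v)) = 0.
Proof.
set a := E v; set u := F a; set x := E u.
have wa : wt (i%:R + 2) a := wtE hw.
have wu : wt (i%:R) u by have := wtF wa; rewrite addrK.
have wx : wt (i%:R + 2) x := wtE wu.
have Fx : F x = 0 := hdom.
have cnz : forall k, (0 < k.+1 < r)%N -> (r < i + 2 + k < r + r)%N \/ (0 < i + 2 + k < r)%N ->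
    qi k.+1%:R * qi (i%:R + 2 + k%:R) != 0.
  move=> k h1 h2; apply: mulf_neq0; first exact: qnz.
  have -> : (i%:R + 2 + k%:R : C) = (i + 2 + k)%N%:R by rewrite !natrD.
  by case: h2 => h2; [apply: qnz2 | apply: qnz].
have hA : iter j.+1 E x = 0.
  apply: (@down (fun k => iter k E x) j.+1 r.-1); first by rewrite /j; lia.
    move=> k hk hz; have {}hz : iter k.+1 E x = 0 := hz; rewrite /=.
    have := CE k wx; rewrite Fx iter_lin0 hz linear0 sub0r => /esym /eqP; rewrite oppr_eq0 => /eqP.
    apply: scale_cancel; apply: cnz; rewrite /j in hk; lia.
  by rewrite /= /x -iterSr prednK ?Er //; lia.
have hA' : forall k, (j.+1 <= k)%N -> iter k E x = 0.
  by move=> k hk; rewrite -(subnK hk) iterD hA iter_lin0.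
have hB : iter j.+1 E a = 0.
  apply: (@down (fun k => iter k E a) j.+1 r.-1); first by rewrite /j; lia.
    move=> k hk hz; have {}hz : iter k.+1 E a = 0 := hz; rewrite /=.
    have := CE k wa; rewrite hz linear0 iterSr -/x hA' ?sub0r; last by lia.
    move=> /esym /eqP; rewrite oppr_eq0 => /eqP.
    apply: scale_cancel; apply: cnz; rewrite /j in hk; lia.
  by rewrite /= /a -iterSr prednK ?Er //; lia.
have hC : iter j E x = 0.
  have := CE j wa; rewrite hB linear0 iterSr -/x.
  have -> : (i%:R + 2 + j%:R : C) = r%:R by rewrite -!natrD /j; congr (_%:R); lia.
  by rewrite qir mulr0 scale0r subr0.
have hx : x = 0.
  apply: (@down (fun k => iter k E x) 0 j) => //.
  move=> k hk hz; have {}hz : iter k.+1 E x = 0 := hz; rewrite /=.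
  have := CE k wx; rewrite Fx iter_lin0 hz linear0 sub0r => /esym /eqP; rewrite oppr_eq0 => /eqP.
  apply: scale_cancel; apply: cnz; rewrite /j in hk; lia.
split => //; split => //.
have hD : iter r.-1 F u = 0.
  have := CF r.-1 hw; rewrite prednK; last by lia.
  rewrite Fr linear0 qir mul0r scale0r addr0 -iterSr prednK; last by lia.
  by move=> <-.
apply: (@down (fun k => iter k F u) i.+1 r.-1); first by lia.
  move=> k hk hz; have {}hz : iter k.+1 F u = 0 := hz; rewrite /=.
  have := CF k wu; rewrite -/x hx iter_lin0 hz linear0 add0r => /esym.
  apply: scale_cancel; apply: mulf_neq0; first by apply: qnz; lia.
  have -> : (i%:R - k%:R : C) = - (k - i)%N%:R by rewrite natrB ?opprB //; lia.
  rewrite qintN oppr_eq0; apply: qnz; lia.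
by [].
Qed.
Lemma wt_eq m m' y : m = m' -> wt m y -> wt m' y.
Proof. by move=> ->. Qed.

Lemma main :
  let j := (r - 2 - i)%N in
  let h := hv F v in
  let Rr := Rv E v in
  let s := sv E F v in
  let L := Lv F i v in
  let wh := fun k : nat => (i%:R - (2 * k)%:R : R[i]) in
  let wR := fun k : nat => ((r - j + 2 * k)%:R : R[i]) in
  let wL := fun k : nat => (j%:R - r%:R - (2 * k)%:R : R[i]) in
  is_submodule E F K Ki H <<prop61_vectors E F i v j>>%VS /\
  (forall k, (k <= i)%N ->
     [/\ H (h k) = wh k *: h k, K (h k) = qpow r (wh k) *: h k,
         H (s k) = wh k *: s k & K (s k) = qpow r (wh k) *: s k]) /\
  (forall k, (k <= j)%N ->
     [/\ H (Rr k) = wR k *: Rr k, K (Rr k) = qpow r (wR k) *: Rr k,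
         H (L k) = wL k *: L k & K (L k) = qpow r (wL k) *: L k]) /\
  (forall k, (k < j)%N -> E (Rr k) = Rr k.+1) /\
  (forall k, (k < i)%N -> F (h k) = h k.+1 /\ F (s k) = s k.+1) /\
  (forall k, (k < j)%N -> F (L k) = L k.+1) /\
  F (h i) = L 0%N /\ E (L 0%N) = s i /\
  E (Rr j) = 0 /\ E (s 0%N) = 0 /\ F (s i) = 0 /\ F (L j) = 0 /\
  (forall k, (1 <= k <= i)%N ->
     E (h k) = qgamma R r i k *: h k.-1 + s k.-1 /\
     E (s k) = qgamma R r i k *: s k.-1) /\
  (forall k, (1 <= k <= j)%N ->
     F (Rr k) = - qgamma R r j k *: Rr k.-1 /\
     E (L k) = - qgamma R r j k *: L k.-1).
Proof.
cbv zeta beta; rewrite -/j.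
have [k1 [k2 k3]] := key.
set a := E v in k1 k2 k3 *; set u := F a in k2 k3 *.
have wa : wt (i%:R + 2) a := wtE hw.
have wu : wt (i%:R) u by have := wtF wa; rewrite addrK.
have ejr : (r%:R : C) = j%:R + i%:R + 2 by rewrite -!natrD; congr _%:R; rewrite /j; lia.
have wh_ : forall k, wt (i%:R - (2 * k)%:R) (hv F v k).
  by move=> k; apply: (wt_eq _ (wt_iterF k hw)); rewrite natrM.
have ws_ : forall k, wt (i%:R - (2 * k)%:R) (sv E F v k).
  by move=> k; apply: (wt_eq _ (wt_iterF k wu)); rewrite natrM.
have wR_ : forall k, wt ((r - j + 2 * k)%:R) (Rv E v k).
  move=> k; apply: (wt_eq _ (wt_iterE k wa)).
  have -> : (r - j)%N = i.+2 by rewrite /j; lia.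
  by rewrite natrD natrM -(addn2 i) natrD.
have wL_ : forall k, wt (j%:R - r%:R - (2 * k)%:R) (Lv F i v k).
  move=> k; apply: (wt_eq _ (wt_iterF k (wt_iterF i.+1 hw))).
  rewrite ejr natrM -natr1; ring.
have hjk : forall k, (j%:R - k.+1%:R + 1 : C) = r%:R - (i%:R + 2 + k%:R).
  by move=> k; rewrite ejr -natr1; ring.
have rEL0 : E (Lv F i v 0) = sv E F v i.
  rewrite /Lv /sv /= (CF i hw) subrr (@qint0 R r) mulr0 scale0r addr0.
  by rewrite iterSr.
have rERj : E (Rv E v j) = 0 by rewrite /Rv -iterS.
have rEs0 : E (sv E F v 0) = 0 by [].
have rFsi : F (sv E F v i) = 0 by rewrite /sv -iterS.
have rFLj : F (Lv F i v j) = 0.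
  rewrite /Lv -iterS -iterD.
  have -> : (j.+1 + i.+1)%N = r by rewrite /j; lia.
  exact: Fr.
have rEh : forall k, (1 <= k <= i)%N ->
     E (hv F v k) = qgamma R r i k *: hv F v k.-1 + sv E F v k.-1 /\
     E (sv E F v k) = qgamma R r i k *: sv E F v k.-1.
  case=> [//|k] hk /=; rewrite /hv /sv (CF k hw) (CF k wu) -/u.
  have -> : qgamma R r i k.+1 = qi k.+1%:R * qi (i%:R - k%:R).
    by rewrite /qgamma; congr (_ * qi _); rewrite -natr1; ring.
  by rewrite iterSr addrC k2 iter_lin0 add0r.
have rFR : forall k, (1 <= k <= j)%N ->
     F (Rv E v k) = - qgamma R r j k *: Rv E v k.-1 /\
     E (Lv F i v k) = - qgamma R r j k *: Lv F i v k.-1.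
  case=> [//|k] hk /=.
  have eg : qgamma R r j k.+1 = qi k.+1%:R * qi (i%:R + 2 + k%:R).
    by rewrite /qgamma hjk (@qint_rB R r r2).
  split.
    by rewrite /Rv (CE k wa) -/u iterSr k2 iter_lin0 sub0r eg scaleNr.
  rewrite /Lv -iterS -!iterD addSn (CF _ hw) iterSr -/a -/u iterD k3 iter_lin0 add0r.
  rewrite eg; congr (_ *: _).
  have -> : (i%:R - (k + i.+1)%:R : C) = - k.+1%:R by rewrite natrD -natr1; ring.
  have -> : ((k + i.+1).+1%:R : C) = i%:R + 2 + k%:R by rewrite -natr1 natrD -natr1; ring.
  rewrite qintN; ring.
set X := prop61_vectors E F i v j.
have stab : forall f : {linear V -> V}, (forall w, w \in X -> f w \in <<X>>%VS) ->
    forall x, x \in <<X>>%VS -> f x \in <<X>>%VS.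
  move=> f hf x hx.
  have := @coord_span _ _ _ (in_tuple X) x hx => ->.
  rewrite linear_sum; apply: memv_suml => k _; rewrite linearZ; apply: memvZ.
  by apply: hf; apply: mem_nth; exact: ltn_ord.
have hU : forall k, (k <= i)%N -> hv F v k \in <<X>>%VS.
  move=> k hk; apply: memv_span; rewrite /X /prop61_vectors !mem_cat.
  by apply/orP; left; apply/mapP; exists k; rewrite // mem_iota.
have RU : forall k, (k <= j)%N -> Rv E v k \in <<X>>%VS.
  move=> k hk; apply: memv_span; rewrite /X /prop61_vectors !mem_cat.
  by apply/orP; right; apply/orP; left; apply/mapP; exists k; rewrite // mem_iota.
have sU : forall k, (k <= i)%N -> sv E F v k \in <<X>>%VS.
  move=> k hk; apply: memv_span; rewrite /X /prop61_vectors !mem_cat.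
  by apply/orP; right; apply/orP; right; apply/orP; left; apply/mapP; exists k; rewrite // mem_iota.
have LU : forall k, (k <= j)%N -> Lv F i v k \in <<X>>%VS.
  move=> k hk; apply: memv_span; rewrite /X /prop61_vectors !mem_cat.
  by apply/orP; right; apply/orP; right; apply/orP; right; apply/mapP; exists k; rewrite // mem_iota.
have cases : forall w, w \in X ->
   [\/ exists2 k, (k <= i)%N & w = hv F v k, exists2 k, (k <= j)%N & w = Rv E v k,
       exists2 k, (k <= i)%N & w = sv E F v k | exists2 k, (k <= j)%N & w = Lv F i v k].
  move=> w; rewrite /X /prop61_vectors !mem_cat.
  case/orP => [/mapP [k]|/orP [/mapP [k]|/orP [/mapP [k]|/mapP [k]]]];
    rewrite mem_iota add0n ltnS => hk ->.
  - by apply: Or41; exists k.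
  - by apply: Or42; exists k.
  - by apply: Or43; exists k.
  - by apply: Or44; exists k.
have wX : forall w, w \in X -> exists m, wt m w.
  move=> w /cases [[k _ ->]|[k _ ->]|[k _ ->]|[k _ ->]]; eexists; by [apply: wh_|apply: wR_|apply: ws_|apply: wL_].
have inX : forall w, w \in X -> w \in <<X>>%VS by move=> w; apply: memv_span.
split.
  move=> x hx; split; apply: stab => // w hw'.
  - case/cases: hw' => [[k hk ->]|[k hk ->]|[k hk ->]|[k hk ->]].
    + case: k hk => [|k] hk; first by rewrite /hv /= -[E v]/(Rv E v 0); apply: RU.
      by have [-> _] := rEh k.+1 hk; apply: memvD; [apply: memvZ|]; [apply: hU|apply: sU]; lia.
    + have [hkj|hkj|->] := ltngtP k j; last by rewrite rERj mem0v.
        by rewrite -[E (Rv E v k)]/(Rv E v k.+1); apply: RU.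
      by lia.
    + case: k hk => [|k] hk; first by rewrite rEs0 mem0v.
      by have [_ ->] := rEh k.+1 hk; apply: memvZ; apply: sU; lia.
    + case: k hk => [|k] hk; first by rewrite rEL0; apply: sU.
      by have [_ ->] := rFR k.+1 hk; apply: memvZ; apply: LU; lia.
  - case/cases: hw' => [[k hk ->]|[k hk ->]|[k hk ->]|[k hk ->]].
    + have [hki|hki|->] := ltngtP k i; [|by lia|].
        by rewrite -[F (hv F v k)]/(hv F v k.+1); apply: hU.
      by rewrite -[F (hv F v i)]/(Lv F i v 0); apply: LU.
    + case: k hk => [|k] hk; first by rewrite -[F (Rv E v 0)]/(sv E F v 0); apply: sU.
      by have [-> _] := rFR k.+1 hk; apply: memvZ; apply: RU; lia.
    + have [hki|hki|->] := ltngtP k i; [|by lia|].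
        by rewrite -[F (sv E F v k)]/(sv E F v k.+1); apply: sU.
      by rewrite rFsi mem0v.
    + have [hki|hki|->] := ltngtP k j; [|by lia|].
        by rewrite -[F (Lv F i v k)]/(Lv F i v k.+1); apply: LU.
      by rewrite rFLj mem0v.
  - have [m hm] := wX w hw'; by rewrite (wtK hm); apply: memvZ; apply: inX.
  - have [m hm] := wX w hw'; by rewrite (wtKi hm); apply: memvZ; apply: inX.
  - have [m hm] := wX w hw'; by rewrite hm; apply: memvZ; apply: inX.
split.
  by move=> k hk; split; rewrite ?(wtK (wh_ k)) ?(wtK (ws_ k)) //; [apply: wh_ | apply: ws_].
split.
  by move=> k hk; split; rewrite ?(wtK (wR_ k)) ?(wtK (wL_ k)) //; [apply: wR_ | apply: wL_].
do 3 (split; first by []).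
by do 6 (split; first by []).
Qed.

End M.

Theorem proposition6p1 (R : realType) (r : nat) (V : vectType R[i])
    (E F K Ki H : {linear V -> V})
    (hV : in_category_C r E F K Ki H)
    (i : nat) (hi : (i.+2 <= r)%N) (v : V)
    (hv_wt : weight_vector H (i%:R : R[i]) v) (hv_dom : dominant E F v) :
  let j := (r - 2 - i)%N in
  let h := hv F v in
  let Rr := Rv E v in
  let s := sv E F v in
  let L := Lv F i v in
  let wh := fun k : nat => (i%:R - (2 * k)%:R : R[i]) in      (* weight of h_{i-2k}, s_{i-2k} *)
  let wR := fun k : nat => ((r - j + 2 * k)%:R : R[i]) in     (* weight of R_{r-j+2k} *)
  let wL := fun k : nat => (j%:R - r%:R - (2 * k)%:R : R[i]) in (* weight of L_{j-r-2k} *)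
  (* the span of the 2r vectors is a submodule *)
  is_submodule E F K Ki H <<prop61_vectors E F i v j>>%VS /\
  (* H w_m = m w_m and K w_m = q^m w_m *)
  (forall k, (k <= i)%N ->
     [/\ H (h k) = wh k *: h k, K (h k) = qpow r (wh k) *: h k,
         H (s k) = wh k *: s k & K (s k) = qpow r (wh k) *: s k]) /\
  (forall k, (k <= j)%N ->
     [/\ H (Rr k) = wR k *: Rr k, K (Rr k) = qpow r (wR k) *: Rr k,
         H (L k) = wL k *: L k & K (L k) = qpow r (wL k) *: L k]) /\
  (* E R_m = R_{m+2};  F w_m = w_{m-2} for w in {h, s, L} *)
  (forall k, (k < j)%N -> E (Rr k) = Rr k.+1) /\
  (forall k, (k < i)%N -> F (h k) = h k.+1 /\ F (s k) = s k.+1) /\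
  (forall k, (k < j)%N -> F (L k) = L k.+1) /\
  (* F h_{-i} = L_{j-r} and E L_{j-r} = s_{-i} *)
  F (h i) = L 0%N /\ E (L 0%N) = s i /\
  (* E R_{j+r} = E s_i = F s_{-i} = F L_{-j-r} = 0 *)
  E (Rr j) = 0 /\ E (s 0%N) = 0 /\ F (s i) = 0 /\ F (L j) = 0 /\
  (* E h_{i-2k} = gamma_{i,k} h_{i-2k+2} + s_{i-2k+2},  E s_{i-2k} = gamma_{i,k} s_{i-2k+2} *)
  (forall k, (1 <= k <= i)%N ->
     E (h k) = qgamma R r i k *: h k.-1 + s k.-1 /\
     E (s k) = qgamma R r i k *: s k.-1) /\
  (* F R_{r-j+2k} = -gamma_{j,k} R_{r-j+2k-2},  E L_{j-2k-r} = -gamma_{j,k} L_{j-2k-r+2} *)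
  (forall k, (1 <= k <= j)%N ->
     F (Rr k) = - qgamma R r j k *: Rr k.-1 /\
     E (L k) = - qgamma R r j k *: L k.-1).
Proof.
have r2 : (2 <= r)%N by apply: leq_trans hi.
exact: (@main R r V E F K Ki H hV r2 i v hi hv_wt.2 hv_dom).
Qed.
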